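(* Let $R$ be a ring with identity and $a,b,c\in R$. Then: (i) $a$ is $(b,c)$-invertible if and only if $a$ is both left and right $(b,c)$-invertible; (ii) $a$ is $(b,c)$-invertible if and only if $b$ and $c$ are regular and $a$ is both left annihilator and right annihilator $(b,c)$-invertible.
   Context: An element $x$ is regular if $x=xzx$ for some $z\in R$. For $x\in R$: $xR=\{xr:r\in R\}$, $Rx=\{rx:r\in R\}$, $x^\circ=\{r: xr=0\}$, ${}^\circ x=\{r: rx=0\}$. $a$ is $(b,c)$-invertible if there is $y\in R$ with $y\in (bRy)\cap(yRc)$, $yab=b$ and $cay=c$. $a$ is left $(b,c)$-invertible if there is $y$ with $Ry\subseteq Rc$ and $yab=b$; right $(b,c)$-invertible if there is $y$ with $yR\subseteq bR$ and $cay=c$; right annihilator $(b,c)$-invertible if there is $y$ with $c^\circ\subseteq y^\circ$ and $yab=b$; left annihilator $(b,c)$-invertible if there is $y$ with ${}^\circ b\subseteq {}^\circ y$ and $cay=c$. *)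

(* Defs.v *)
From mathcomp Require Import all_boot all_algebra.
Set Implicit Arguments. Unset Strict Implicit. Unset Printing Implicit Defensive.
Import GRing.Theory.
Local Open Scope ring_scope.

Section Defs.
Variable R : pzRingType.

Definition regular (x : R) : Prop := exists z : R, x = x * z * x.

Definition rideal (x : R) : R -> Prop := fun t => exists r : R, t = x * r.
Definition lideal (x : R) : R -> Prop := fun t => exists r : R, t = r * x.

Definition rann (x : R) : R -> Prop := fun r => x * r = 0.
Definition lann (x : R) : R -> Prop := fun r => r * x = 0.

Definition bc_inverse (a b c y : R) : Prop :=
  [/\ (exists r : R, y = b * r * y), (exists s : R, y = y * s * c),
      y * a * b = b & c * a * y = c].

Definition bc_invertible (a b c : R) : Prop := exists y : R, bc_inverse a b c y.

Definition left_bc_invertible (a b c : R) : Prop :=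
  exists y : R, (forall t, lideal y t -> lideal c t) /\ y * a * b = b.

Definition right_bc_invertible (a b c : R) : Prop :=
  exists y : R, (forall t, rideal y t -> rideal b t) /\ c * a * y = c.

Definition right_ann_bc_invertible (a b c : R) : Prop :=
  exists y : R, (forall r, rann c r -> rann y r) /\ y * a * b = b.

Definition left_ann_bc_invertible (a b c : R) : Prop :=
  exists y : R, (forall r, lann b r -> lann y r) /\ c * a * y = c.

End Defs.

(* Main.v *)
Require Import Defs.
From mathcomp Require Import all_boot all_algebra.
Import GRing.Theory.
Local Open Scope ring_scope.

Lemma key (R : pzRingType) (a b c u v : R) :
  (u * c) * a * b = b -> c * a * (b * v) = c -> bc_invertible a b c.
Proof.
move=> H1 H2.
have E1 : u * c = u * c * a * (b * v) by rewrite -[in LHS]H2 !mulrA.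
have E2 : b * v = u * c * a * (b * v) by rewrite -[in LHS]H1 !mulrA.
have Ey : u * c = b * v by rewrite E1 -E2.
have Yy : b * v * a * (b * v) = b * v by rewrite -{1}Ey -E1.
exists (b * v); split.
- exists (v * a); rewrite -{1}Yy !mulrA //.
- exists (a * u); rewrite -{1}Yy -{2}Ey !mulrA //.
- by rewrite -Ey.
- by [].
Qed.

Theorem corollary2p7 (R : pzRingType) (a b c : R) :
  (bc_invertible a b c <->
     left_bc_invertible a b c /\ right_bc_invertible a b c) /\
  (bc_invertible a b c <->
     [/\ regular b, regular c, left_ann_bc_invertible a b c
       & right_ann_bc_invertible a b c]).
Proof.
split; split.
- move=> [y [[r Hr] [s Hs] Hb Hc]]; split.
  + exists y; split=> // t [q ->]; exists (q * y * s); rewrite {1}Hs !mulrA //.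
  + exists y; split=> // t [q ->]; exists (r * y * q); rewrite {1}Hr !mulrA //.
- move=> [[y1 [H1 E1]] [y2 [H2 E2]]].
  have [u Hu] := H1 y1 (ex_intro _ 1 (esym (mul1r _))).
  have [v Hv] := H2 y2 (ex_intro _ 1 (esym (mulr1 _))).
  apply: (@key _ a b c u v); by rewrite -?Hu -?Hv.
- move=> [y [[r Hr] [s Hs] Hb Hc]]; split.
  + exists (r * y * a); rewrite -{1}Hb {1}Hr !mulrA //.
  + exists (a * y * s); rewrite -{1}Hc {1}Hs !mulrA //.
  + exists y; split=> // q; rewrite /lann => Hq.
    by rewrite Hr !mulrA Hq !mul0r.
  + exists y; split=> // q; rewrite /rann => Hq.
    by rewrite Hs -!mulrA Hq !mulr0.
- move=> [[z Hz] [w Hw] [y2 [H2 E2]] [y1 [H1 E1]]].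
  have F1 : y1 = y1 * w * c.
    apply/eqP; rewrite -subr_eq0 -mulrA -{1}(mulr1 y1) -mulrBr; apply/eqP.
    apply: H1; rewrite /rann mulrBr mulr1 mulrA -Hw subrr //.
  have F2 : y2 = b * z * y2.
    apply/eqP; rewrite -subr_eq0 -{1}(mul1r y2) -mulrBl; apply/eqP.
    apply: H2; rewrite /lann mulrBl mul1r -Hz subrr //.
  apply: (@key _ a b c (y1 * w) (z * y2)).
  + by rewrite -F1.
  + by rewrite (mulrA b z y2) -F2.
Qed.
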